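(* Let $R$ be a domain such that $\mathcal I(R)$ is a BF-monoid. Suppose there exist distinct $X_1,X_2\in R\setminus\{0\}$ such that $\mathfrak a_1(X_1,X_2)$, $\mathfrak b_2(X_1,X_2)$, and $\mathfrak c_{2i+1}(X_1,X_2)$ for all $i\in\mathbb N$ are atoms of $\mathcal I(R)$. Then: \begin{enumerate} \item $\mathcal I(R)$ is not a transfer Krull monoid; \item $\mathcal I(R)$ is not locally finitely generated; \item $\mathcal U_k(\mathcal I(R))=\mathbb N_{\ge2}$ for all $k\ge2$. \end{enumerate}
   Context: $\mathcal I(R)$: semigroup of nonzero ideals of $R$ under multiplication. Ideals: $\mathfrak a_1(X_1,X_2)=\langle X_1,X_2\rangle$; $\mathfrak b_2(X_1,X_2)=\langle X_1^2,X_2^2\rangle$; $\mathfrak c_{2i+1}(X_1,X_2)$ is the ideal generated by the monomials $X_1^{2i+1-t}X_2^t$ with $t\in\{0,1,3,5,\dots,2i+1\}$. Monoids are commutative, unit-cancellative, with identity; atoms, $\mathsf L(a)$ (lengths of factorizations into atoms up to units), $\mathcal L(H)$, BF-monoid (all $\mathsf L(a)$ finite nonempty), $\mathcal U_k(H)$ (union of all $L\in\mathcal L(H)$ containing $k$). Locally finitely generated: for every $a$, the submonoid of all divisors of powers of $a$, modulo units, is finitely generated. Transfer homomorphism $\theta:H\to B$: (T1) $B=\theta(H)B^\times$, $\theta^{-1}(B^\times)=H^\times$; (T2) $\theta(u)=bc$ implies $u=vw$ with $\theta(v)\in bB^\times$, $\theta(w)\in cB^\times$. Krull monoid: cancellative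 monoid with a divisor homomorphism into a factorial monoid. Transfer Krull: has a transfer homomorphism to a Krull monoid. *)

(* Defs.v *)
From HB Require Import structures.
From mathcomp Require Import all_boot all_algebra.
From Stdlib Require List.

Set Implicit Arguments.
Unset Strict Implicit.
Unset Printing Implicit Defensive.

Import GRing.Theory.
Local Open Scope ring_scope.

Record monoid_struct := MonoidStruct {
  carrier :> Type;
  mop : carrier -> carrier -> carrier;
  mone : carrier }.

Section MonoidNotions.
Variable M : monoid_struct.

Definition is_cmonoid : Prop :=
  (forall a b c : M, mop a (mop b c) = mop (mop a b) c) /\
  (forall a b : M, mop a b = mop b a) /\
  (forall a : M, mop (@mone M) a = a).

Definition is_unit (a : M) : Prop := exists b, mop a b = @mone M.

Definition unit_cancellative : Prop :=
  forall a u : M, (mop a u = a \/ mop u a = a) -> is_unit u.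

Definition cancellative : Prop :=
  forall a b c : M, mop a b = mop a c -> b = c.

Definition divides (a b : M) : Prop := exists c, b = mop a c.

Definition is_atom (a : M) : Prop :=
  ~ is_unit a /\ forall b c : M, a = mop b c -> is_unit b \/ is_unit c.

Definition is_prime (p : M) : Prop :=
  ~ is_unit p /\ forall a b : M, divides p (mop a b) -> divides p a \/ divides p b.

Definition mprod (s : seq M) : M := foldr (@mop M) (@mone M) s.

Definition mpow (a : M) (n : nat) : M := iter n (mop a) (@mone M).

(* k \in L(a): a is (up to a unit) a product of k atoms. *)
Definition lengths (a : M) (k : nat) : Prop :=
  exists s : seq M, size s = k /\ (forall x, List.In x s -> is_atom x) /\
    exists u, is_unit u /\ a = mop u (mprod s).

(* BF-monoid (in the standing setting of unit-cancellative monoids). *)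
Definition BF_monoid : Prop :=
  unit_cancellative /\
  forall a : M, (exists k, lengths a k) /\ (exists N, forall k, lengths a k -> (k <= N)%N).

Definition Uk (k l : nat) : Prop := exists a : M, lengths a k /\ lengths a l.

Definition factorial_monoid : Prop :=
  is_cmonoid /\ cancellative /\
  forall a : M, ~ is_unit a ->
    exists s : seq M, (forall x, List.In x s -> is_prime x) /\ a = mprod s.

(* locally finitely generated: for every a, the divisor-closed submonoid
   [[a]] = {b | b divides some a^n} is finitely generated modulo units. *)
Definition locally_fin_gen : Prop :=
  forall a : M, exists gens : seq M,
    (forall g, List.In g gens -> exists n, divides g (mpow a n)) /\
    forall b : M, (exists n, divides b (mpow a n)) ->
      exists s : seq M, (forall x, List.In x s -> List.In x gens) /\
        exists u, is_unit u /\ b = mop u (mprod s).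
End MonoidNotions.

Definition monoid_hom (H B : monoid_struct) (f : H -> B) : Prop :=
  (forall a b, f (mop a b) = mop (f a) (f b)) /\ f (@mone H) = @mone B.

Definition divisor_hom (H D : monoid_struct) (f : H -> D) : Prop :=
  monoid_hom f /\ forall a b, divides (f a) (f b) -> divides a b.

Definition is_Krull (B : monoid_struct) : Prop :=
  is_cmonoid B /\ cancellative B /\
  exists D : monoid_struct, factorial_monoid D /\ exists f : B -> D, divisor_hom f.

Definition transfer_hom (H B : monoid_struct) (t : H -> B) : Prop :=
  monoid_hom t /\
  (forall b : B, exists a u, is_unit u /\ b = mop (t a) u) /\
  (forall a : H, is_unit (t a) <-> is_unit a) /\
  (forall (u : H) (b c : B), t u = mop b c ->
     exists v w : H, u = mop v w /\
       (exists e, is_unit e /\ t v = mop b e) /\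
       (exists e, is_unit e /\ t w = mop c e)).

Definition transfer_Krull (H : monoid_struct) : Prop :=
  exists B : monoid_struct, is_Krull B /\ exists t : H -> B, transfer_hom t.

Section Ideals.
Variable R : idomainType.

Definition is_ideal (I : R -> Prop) : Prop :=
  I 0 /\ (forall x y, I x -> I y -> I (x + y)) /\ (forall r x, I x -> I (r * x)).

Definition nonzero_ideal (I : R -> Prop) : Prop :=
  is_ideal I /\ exists x, I x /\ x != 0.

Definition ideal_mul (I J : R -> Prop) : R -> Prop := fun x =>
  exists s : seq (R * R), (forall p, p \in s -> I p.1 /\ J p.2) /\
    x = \sum_(p <- s) p.1 * p.2.

Definition ideal_gen (g : seq R) : R -> Prop := fun x =>
  exists s : seq (R * R), (forall p, p \in s -> p.2 \in g) /\
    x = \sum_(p <- s) p.1 * p.2.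

Lemma ideal_mul_nz I J : nonzero_ideal I -> nonzero_ideal J ->
  nonzero_ideal (ideal_mul I J).
Proof.
move=> [[_ [_ IM]] [a [Ia a0]]] [_ [b [Jb b0]]]; split; last first.
  exists (a * b); split; last by rewrite mulf_neq0.
  exists [:: (a, b)]; split; last by rewrite big_seq1.
  by move=> p; rewrite inE => /eqP ->.
split; first by exists [::]; split=> //; rewrite big_nil.
split.
  move=> x y [s [Hs ->]] [t [Ht ->]]; exists (s ++ t); split; last by rewrite big_cat.
  by move=> p; rewrite mem_cat => /orP [/Hs|/Ht].
move=> r x [s [Hs ->]]; exists [seq (r * p.1, p.2) | p <- s]; split.
  by move=> p /mapP [q /Hs [Iq Jq] ->] /=; split=> //; apply: IM.
by rewrite big_map big_distrr /=; apply: eq_bigr => p _; rewrite mulrA.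
Qed.

Lemma ideal_full_nz : nonzero_ideal (fun _ : R => True).
Proof. by split=> //; exists 1; split=> //; apply: oner_neq0. Qed.

Definition nzideal := {I : R -> Prop | nonzero_ideal I}.

Definition nzideal_mul (I J : nzideal) : nzideal :=
  exist _ (ideal_mul (proj1_sig I) (proj1_sig J))
          (ideal_mul_nz (proj2_sig I) (proj2_sig J)).

Definition nzideal_one : nzideal := exist _ (fun _ => True) ideal_full_nz.

(* The monoid I(R) of nonzero ideals under ideal multiplication
   (equality of ideals is equality of subsets, via extensionality). *)
Definition ideal_monoid : monoid_struct :=
  @MonoidStruct nzideal nzideal_mul nzideal_one.

Definition gen_is_atom (g : seq R) : Prop :=
  exists A : ideal_monoid,
    (forall x, proj1_sig A x <-> ideal_gen g x) /\ is_atom A.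

Definition a1_gens (X1 X2 : R) : seq R := [:: X1; X2].
Definition b2_gens (X1 X2 : R) : seq R := [:: X1 ^+ 2; X2 ^+ 2].
Definition c_gens (X1 X2 : R) (i : nat) : seq R :=
  [seq X1 ^+ (i.*2.+1 - t) * X2 ^+ t | t <- 0%N :: [seq j.*2.+1 | j <- iota 0 i.+1]].
End Ideals.

(* Main.v *)
Require Import Defs.
From mathcomp Require Import all_boot all_algebra.
From mathcomp Require Import zify.
From Stdlib Require Import FunctionalExtensionality PropExtensionality ProofIrrelevance.
From Stdlib Require List IndefiniteDescription.

Section S.
Set Implicit Arguments.
Unset Strict Implicit.
Variable R : idomainType.
Local Open Scope ring_scope.
Import GRing.Theory.

Lemma pred_ext (P Q : R -> Prop) : (forall x, P x <-> Q x) -> P = Q.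
Proof.
move=> H; apply: functional_extensionality => x; apply: propositional_extensionality; exact: H.
Qed.

Lemma nz_eq (I J : nzideal R) : proj1_sig I = proj1_sig J -> I = J.
Proof.
case: I J => [I HI] [J HJ] /= E; subst J; by rewrite (proof_irrelevance _ HI HJ).
Qed.

Lemma gen_ideal (g : seq R) : is_ideal (ideal_gen g).
Proof.
split; first by exists [::]; split=> //; rewrite big_nil.
split.
  move=> x y [s [Hs ->]] [t [Ht ->]]; exists (s ++ t); split; last by rewrite big_cat.
  by move=> p; rewrite mem_cat => /orP [/Hs|/Ht].
move=> r x [s [Hs ->]]; exists [seq (r * p.1, p.2) | p <- s]; split.
  by move=> p /mapP [q /Hs Hq ->].
by rewrite big_map big_distrr /=; apply: eq_bigr => p _; rewrite mulrA.
Qed.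

Lemma gen_mem (g : seq R) z : z \in g -> ideal_gen g z.
Proof.
move=> Hz; exists [:: (1, z)]; split; last by rewrite big_seq1 mul1r.
by move=> p; rewrite inE => /eqP ->.
Qed.

Lemma gen_min (g : seq R) (I : R -> Prop) : is_ideal I -> (forall z, z \in g -> I z) ->
  forall x, ideal_gen g x -> I x.
Proof.
move=> [I0 [ID IM]] Hg x [s [Hs ->]]; elim: s Hs => [|p s IH] Hs; first by rewrite big_nil.
rewrite big_cons; apply: ID; last by apply: IH => q Hq; apply: Hs; rewrite inE Hq orbT.
by apply: IM; apply: Hg; apply: Hs; rewrite inE eqxx.
Qed.

Lemma mul_min (I J K : R -> Prop) : is_ideal K -> (forall u v, I u -> J v -> K (u * v)) ->
  forall x, ideal_mul I J x -> K x.
Proof.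
move=> [K0 [KD KM]] H x [s [Hs ->]]; elim: s Hs => [|p s IH] Hs; first by rewrite big_nil.
rewrite big_cons; apply: KD; last by apply: IH => q Hq; apply: Hs; rewrite inE Hq orbT.
by have [] := Hs p (mem_head _ _); apply: H.
Qed.

Lemma mul_mem (I J : R -> Prop) u v : I u -> J v -> ideal_mul I J (u * v).
Proof.
move=> Hu Hv; exists [:: (u, v)]; split; last by rewrite big_seq1.
by move=> p; rewrite inE => /eqP ->.
Qed.

Lemma mul_ideal (I J : R -> Prop) : is_ideal I -> is_ideal (ideal_mul I J).
Proof.
move=> [_ [_ IM]]; split; first by exists [::]; split=> //; rewrite big_nil.
split.
  move=> x y [s [Hs ->]] [t [Ht ->]]; exists (s ++ t); split; last by rewrite big_cat.
  by move=> p; rewrite mem_cat => /orP [/Hs|/Ht].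
move=> r x [s [Hs ->]]; exists [seq (r * p.1, p.2) | p <- s]; split.
  by move=> p /mapP [q /Hs [Iq Jq] ->] /=; split=> //; apply: IM.
by rewrite big_map big_distrr /=; apply: eq_bigr => p _; rewrite mulrA.
Qed.

Lemma ideal_rmul (K T : R -> Prop) : is_ideal K -> is_ideal (fun w => forall k, T k -> K (w * k)).
Proof.
move=> [K0 [KD KM]]; split; first by move=> k _; rewrite mul0r.
split; first by move=> x y Hx Hy k Hk; rewrite mulrDl; apply: KD; [apply: Hx|apply: Hy].
by move=> r x Hx k Hk; rewrite -mulrA; apply: KM; apply: Hx.
Qed.

Lemma ideal_lmul (K : R -> Prop) z : is_ideal K -> is_ideal (fun k => K (z * k)).
Proof.
move=> [K0 [KD KM]]; split; first by rewrite mulr0.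
split; first by move=> x y Hx Hy; rewrite mulrDr; apply: KD.
by move=> r x Hx; rewrite mulrCA; apply: KM.
Qed.

Lemma gen_mul (g h : seq R) x :
  ideal_mul (ideal_gen g) (ideal_gen h) x <->
  ideal_gen [seq u * v | u <- g, v <- h] x.
Proof.
split.
  apply: mul_min; first exact: gen_ideal.
  move=> u v Hu; move: u Hu v; apply: gen_min; first exact: ideal_rmul (gen_ideal _).
  move=> z Hz; apply: gen_min; first exact: ideal_lmul (gen_ideal _).
  by move=> y Hy; apply: gen_mem; apply: allpairs_f.
apply: gen_min; first exact: mul_ideal (gen_ideal _).
move=> z /allpairsP [[u v] [/= Hu Hv ->]]; apply: mul_mem; exact: gen_mem.
Qed.

Lemma gen_eqi (g g' : seq R) : g =i g' -> ideal_gen g = ideal_gen g'.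
Proof.
move=> E; apply: pred_ext => x; split => [[s [Hs ->]]|[s [Hs ->]]]; exists s; split => // p Hp.
  by rewrite -E; apply: Hs.
by rewrite E; apply: Hs.
Qed.

Definition M := ideal_monoid R.
Definition one : M := @mone M.

Lemma nzI (I : nzideal R) : is_ideal (proj1_sig I).
Proof. exact: (proj1 (proj2_sig I)). Qed.

Lemma mopE (I J : M) : proj1_sig (mop I J) = ideal_mul (proj1_sig I) (proj1_sig J).
Proof. by []. Qed.

Lemma mulC_aux (A B : M) x : ideal_mul (proj1_sig A) (proj1_sig B) x -> ideal_mul (proj1_sig B) (proj1_sig A) x.
Proof.
apply: mul_min; first exact: mul_ideal (nzI _).
by move=> u v Hu Hv; rewrite mulrC; apply: mul_mem.
Qed.

Lemma mulC (I J : M) : mop I J = mop J I.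
Proof.
by apply: nz_eq; rewrite !mopE; apply: pred_ext => x; split; apply: mulC_aux.
Qed.

Lemma mul1 (I : M) : mop one I = I.
Proof.
apply: nz_eq; rewrite mopE; apply: pred_ext => x; split.
  apply: mul_min; first exact: nzI.
  by move=> u v _ Hv; have [_ [_ IM]] := nzI I; apply: IM.
by move=> Hx; rewrite -(mul1r x); apply: mul_mem.
Qed.

Lemma mulI1 (I : M) : mop I one = I.
Proof. by rewrite mulC mul1. Qed.

Lemma mulA (I J K : M) : mop I (mop J K) = mop (mop I J) K.
Proof.
apply: nz_eq; rewrite !mopE; apply: pred_ext => x; split.
  apply: mul_min; first by apply: mul_ideal; apply: mul_ideal; apply: nzI.
  move=> u w Hu Hw; rewrite mulrC; move: w Hw u Hu.
  apply: mul_min; first by apply: ideal_rmul; apply: mul_ideal; apply: mul_ideal; apply: nzI.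
  move=> v k Hv Hk u Hu; rewrite mulrAC [v * u]mulrC; apply: mul_mem => //; exact: mul_mem.
apply: mul_min; first by apply: mul_ideal; apply: nzI.
move=> w k Hw Hk; move: w Hw k Hk.
apply: mul_min; first by apply: ideal_rmul; apply: mul_ideal; apply: nzI.
move=> u v Hu Hv k Hk; rewrite -mulrA; apply: mul_mem => //; exact: mul_mem.
Qed.

Lemma unit_one (u : M) : is_unit u -> u = one.
Proof.
move=> [v Hv]; apply: nz_eq; apply: pred_ext => x; split => // _.
have : proj1_sig (mop u v) x by rewrite Hv.
rewrite mopE; apply: mul_min; first exact: nzI.
by move=> p q Hp _; rewrite mulrC; have [_ [_ IM]] := nzI u; apply: IM.
Qed.

Lemma unit_mulL (x y : M) : is_unit (mop x y) -> is_unit x.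
Proof. by move=> [b Hb]; exists (mop y b); rewrite mulA. Qed.

Lemma atom_not_one (x : M) : is_atom x -> x <> one.
Proof. by move=> [Hu _] E; apply: Hu; exists one; rewrite E mul1. Qed.

Lemma atom_mprod (a : M) (s : seq M) : is_atom a -> a = mprod s -> exists2 g, List.In g s & a = g.
Proof.
move=> Ha; elim: s => [|g s IH] E; first by have := atom_not_one Ha; rewrite E.
have {}E : a = mop g (mprod s) := E.
have [_ H] := Ha; case: (H _ _ E) => /unit_one U.
  by rewrite U mul1 in E; have [g' Hg' ->] := IH E; exists g' => //; right.
by rewrite U mulI1 in E; exists g => //; left.
Qed.

Lemma mpow_nseq (a : M) n : mpow a n = mprod (nseq n a).
Proof. by elim: n => // n IH; rewrite /mpow iterS -/(mpow a n) IH. Qed.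

Lemma In_nseq (x a : M) n : List.In x (nseq n a) -> x = a.
Proof. by elim: n => //= n IH [->|/IH]. Qed.

Lemma gen_nz (X1 X2 : R) (S : seq (nat * nat)) : X1 != 0 -> X2 != 0 -> S != [::] ->
  nonzero_ideal (ideal_gen [seq X1 ^+ s.1 * X2 ^+ s.2 | s <- S]).
Proof.
case: S => // s S n1 n2 _; split; first exact: gen_ideal.
exists (X1 ^+ s.1 * X2 ^+ s.2); split; first by apply: gen_mem; rewrite /= mem_head.
by rewrite mulf_neq0 // expf_neq0.
Qed.

Section Mono.
Variables X1 X2 : R.

Definition mono (S : seq (nat * nat)) : seq R := [seq X1 ^+ s.1 * X2 ^+ s.2 | s <- S].
Definition psum (S T : seq (nat * nat)) : seq (nat * nat) :=
  [seq (s.1 + t.1, s.2 + t.2)%N | s <- S, t <- T].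
Definition Rep (I : M) S := proj1_sig I = ideal_gen (mono S).

Lemma Rep_mul I J S T : Rep I S -> Rep J T -> Rep (mop I J) (psum S T).
Proof.
rewrite /Rep mopE => -> ->; apply: pred_ext => x; rewrite gen_mul.
suff E : [seq u * v | u <- mono S, v <- mono T] =i mono (psum S T) by rewrite (gen_eqi E).
move=> z; apply/allpairsP/mapP.
  move=> [[u v] [/= /mapP [s Hs ->] /mapP [t Ht ->] ->]].
  exists (s.1 + t.1, s.2 + t.2)%N; first by apply/allpairsP; exists (s, t).
  by rewrite /= !exprD mulrACA.
move=> [p /allpairsP [[s t] [/= Hs Ht ->]] ->].
exists (X1 ^+ s.1 * X2 ^+ s.2, X1 ^+ t.1 * X2 ^+ t.2); split => /=.
- by apply/mapP; exists s.
- by apply/mapP; exists t.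
by rewrite !exprD mulrACA.
Qed.

Lemma Rep_eqi I S S' : Rep I S -> S =i S' -> Rep I S'.
Proof. by rewrite /Rep => -> E; apply: gen_eqi; apply: eq_mem_map. Qed.

Lemma Rep_uniq I J S : Rep I S -> Rep J S -> I = J.
Proof. by rewrite /Rep => HI HJ; apply: nz_eq; rewrite HI HJ. Qed.

Lemma Rep_one : Rep one [:: (0, 0)%N].
Proof.
apply: pred_ext => x; split => // _.
have H1 : ideal_gen (mono [:: (0, 0)%N]) 1.
  by apply: gen_mem; rewrite /mono /= !expr0 GRing.mulr1 mem_seq1.
by rewrite -(GRing.mulr1 x); have [_ [_ IM]] := gen_ideal (mono [:: (0, 0)%N]); apply: IM.
Qed.
End Mono.

Definition full n := [seq (n - t, t)%N | t <- iota 0 n.+1].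
Definition psum' := psum.

Lemma mem_full n u v : ((u, v) \in full n) = (u + v == n)%N.
Proof.
apply/mapP/eqP.
  by move=> [t]; rewrite mem_iota => Ht [-> ->]; lia.
move=> H; exists v; first by rewrite mem_iota; lia.
congr pair; lia.
Qed.

Lemma mem_psum S T x : x \in psum S T <-> exists s t, s \in S /\ t \in T /\ x = (s.1 + t.1, s.2 + t.2)%N.
Proof.
split.
  by move=> /allpairsP [[s t] [/= Hs Ht ->]]; exists s, t.
by move=> [s [t [Hs [Ht ->]]]]; apply/allpairsP; exists (s, t).
Qed.

Lemma psumC S T : psum S T =i psum T S.
Proof.
move=> x; apply/idP/idP => /mem_psum [s [t [Hs [Ht ->]]]]; apply/mem_psum; exists t, s;
  by do 2!split=> //; congr pair; lia.
Qed.

Lemma psum_eqr S T T' : T =i T' -> psum S T =i psum S T'.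
Proof.
move=> E x; apply/idP/idP => /mem_psum [s [t [Hs [Ht ->]]]]; apply/mem_psum; exists s, t.
  by rewrite -E.
by rewrite E.
Qed.

Lemma psum_full m p : psum (full m) (full p) =i full (m + p).
Proof.
move=> [u v]; rewrite mem_full; apply/idP/idP.
  move/mem_psum => [[s1 s2] [[t1 t2] [Hs [Ht [-> ->]]]]]; move: Hs Ht.
  by rewrite !mem_full => /eqP Hs /eqP Ht; apply/eqP; lia.
move/eqP => H; apply/mem_psum.
exists (minn u m, m - minn u m)%N, (u - minn u m, v - (m - minn u m))%N.
rewrite !mem_full; split; first by apply/eqP; lia.
split; first by apply/eqP; lia.
congr pair => /=; lia.
Qed.

Definition Bset := [:: (2, 0); (0, 2)]%N.

Lemma psum_B p : (1 <= p)%N -> psum Bset (full p) =i full (p + 2).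
Proof.
move=> Hp [u v]; rewrite mem_full; apply/idP/idP.
  move/mem_psum => [[s1 s2] [[t1 t2] [Hs [Ht [-> ->]]]]]; move: Hs Ht.
  rewrite mem_full !inE => /orP [/eqP [-> ->]|/eqP [-> ->]] /eqP Ht /=; apply/eqP; lia.
move/eqP => H; apply/mem_psum.
case: (leqP 2 u) => Hu.
  exists (2, 0)%N, (u - 2, v)%N; rewrite mem_full mem_head; split=> //.
  by split; [apply/eqP; lia| congr pair => /=; lia].
exists (0, 2)%N, (u, v - 2)%N; rewrite mem_full !inE eqxx orbT; split=> //.
by split; [apply/eqP; lia| congr pair => /=; lia].
Qed.

Definition Cset i := [seq (i.*2.+1 - t, t)%N | t <- 0%N :: [seq j.*2.+1 | j <- iota 0 i.+1]].

Lemma mem_Cset i u v : ((u, v) \in Cset i) = ((u + v == i.*2.+1) && ((v == 0) || odd v))%N.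
Proof.
apply/mapP/andP.
  move=> [t Ht [-> ->]]; rewrite inE in Ht; case/orP: Ht => [/eqP ->|/mapP [j Hj ->]].
    by split=> //; apply/eqP; lia.
  move: Hj; rewrite mem_iota => Hj; split; last by rewrite /= odd_double.
  apply/eqP; lia.
move=> [/eqP Huv Hv]; exists v; last by congr pair; lia.
case/orP: Hv => [/eqP ->|Ho]; first exact: mem_head.
rewrite inE; apply/orP; right; apply/mapP; exists v./2.
  have := odd_double_half v; rewrite Ho mem_iota => H; lia.
by rewrite -[X in X = _](odd_double_half v) Ho add1n.
Qed.

Lemma psum_C i p : (1 <= p)%N -> psum (Cset i) (full p) =i full (i.*2.+1 + p).
Proof.
move=> Hp [u v]; rewrite mem_full; apply/idP/idP.
  move/mem_psum => [[s1 s2] [[t1 t2] [Hs [Ht [-> ->]]]]]; move: Hs Ht.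
  by rewrite mem_Cset mem_full => /andP [/eqP Hs _] /eqP Ht /=; apply/eqP; lia.
move/eqP => H; apply/mem_psum.
set L := (i.*2.+1 - u)%N.
have [t [Ht1 Ht2 Ht3 Ht4]] : exists t, [/\ (t <= i.*2.+1)%N, (i.*2.+1 - t <= u)%N, (t <= v)%N
     & ((t == 0) || odd t)%N].
  case: (eqVneq L 0%N) => HL0; first by exists 0%N; split=> //; lia.
  case HLo: (odd L); first by exists L; split=> //; [lia|lia|lia|rewrite HLo ?orbT].
  have Hu : u != 0%N.
    by apply/eqP => Hu; move: HLo; rewrite /L Hu subn0 /= odd_double.
  exists L.+1; split; [lia|lia|lia|by rewrite /= HLo].
exists (i.*2.+1 - t, t)%N, (u - (i.*2.+1 - t), v - t)%N; split.
  by rewrite mem_Cset Ht4 andbT; apply/eqP; lia.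
by rewrite mem_full; split; [apply/eqP; lia|congr pair => /=; lia].
Qed.
End S.

Section T.
Variable R : idomainType.
Variables X1 X2 : R.
Hypothesis n1 : X1 != 0%R.
Hypothesis n2 : X2 != 0%R.
Local Open Scope ring_scope.
Import GRing.Theory.

Definition Aid : M R := exist _ _ (gen_nz (S := full 1) n1 n2 isT).
Definition Bid : M R := exist _ _ (gen_nz (S := Bset) n1 n2 isT).
Definition Cid i : M R := exist _ _ (gen_nz (S := Cset i) n1 n2 isT).

Lemma RA : Rep X1 X2 Aid (full 1). Proof. by []. Qed.
Lemma RB : Rep X1 X2 Bid Bset. Proof. by []. Qed.
Lemma RC i : Rep X1 X2 (Cid i) (Cset i). Proof. by []. Qed.

Lemma gens_a : a1_gens X1 X2 = mono X1 X2 (full 1).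
Proof. by rewrite /mono /= expr0 expr1 GRing.mulr1 GRing.mul1r. Qed.
Lemma gens_b : b2_gens X1 X2 = mono X1 X2 Bset.
Proof. by rewrite /mono /= expr0 GRing.mulr1 GRing.mul1r. Qed.
Lemma gens_c i : c_gens X1 X2 i = mono X1 X2 (Cset i).
Proof. by rewrite /mono /Cset -map_comp. Qed.

Lemma atom_of g S (I : M R) : gen_is_atom g -> g = mono X1 X2 S -> Rep X1 X2 I S -> is_atom I.
Proof.
move=> [A [HA Hat]] E HI.
have -> : I = A; last exact: Hat.
by apply: nz_eq; rewrite HI -E; apply: pred_ext => x; rewrite HA.
Qed.

Lemma Rpow n : Rep X1 X2 (mprod (nseq n Aid)) (full n).
Proof.
elim: n => [|n IH]; first exact: Rep_one.
exact: (Rep_eqi (Rep_mul RA IH) (psum_full 1 n)).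
Qed.

Lemma len_of (E : M R) (s : seq (M R)) n : Rep X1 X2 E (full n) -> Rep X1 X2 (mprod s) (full n) ->
  (forall x, List.In x s -> is_atom x) -> lengths E (size s).
Proof.
move=> HE Hs Ha; exists s; split=> //; split=> //; exists (one R); split.
  by exists (one R); exact: mul1.
by rewrite mul1; exact: Rep_uniq HE Hs.
Qed.

Section Atoms.
Hypothesis HA : is_atom Aid.
Hypothesis HB : is_atom Bid.
Hypothesis HC : forall j, (1 <= j)%N -> is_atom (Cid j).

Lemma Ain p x : List.In x (nseq p Aid) -> is_atom x.
Proof. by move/In_nseq ->. Qed.

Lemma all_len n m : ~~ odd n -> (2 <= m <= n)%N -> lengths (mprod (nseq n Aid)) m.
Proof.
move=> Hn /andP [Hm1 Hm2].
have Hn2 := odd_double_half n; rewrite (negbTE Hn) in Hn2.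
case: (eqVneq m n) => [->|Hmn].
  by have := len_of (Rpow n) (Rpow n) (@Ain n); rewrite size_nseq.
have := odd_double_half (n - m).
case Ho: (odd (n - m)) => Hdh.
  case: (eqVneq (n - m) 1)%N => H1.
    have Hp : (1 <= n - 2)%N by lia.
    have HR := Rep_eqi (Rep_mul RB (Rpow (n - 2))) (psum_B Hp).
    rewrite (_ : (n - 2 + 2 = n)%N) in HR; last by lia.
    have := len_of (s := Bid :: nseq (n - 2) Aid) (Rpow n) HR.
    rewrite /= size_nseq (_ : (n - 2).+1 = m); last by lia.
    by apply; move=> x [<-|/In_nseq ->].
  set j := ((n - m)./2)%N.
  have Hj : (1 <= j)%N by rewrite /j; lia.
  have Hp : (1 <= m - 2)%N by rewrite /j in Hj *; lia.
  have HR1 := Rep_eqi (Rep_mul (RC j) (Rpow (m - 2))) (psum_C j Hp).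
  have Hp2 : (1 <= j.*2.+1 + (m - 2))%N by lia.
  have HR := Rep_eqi (Rep_mul RB HR1) (psum_B Hp2).
  rewrite (_ : (j.*2.+1 + (m - 2) + 2 = n)%N) in HR; last by rewrite /j; lia.
  have := len_of (s := Bid :: Cid j :: nseq (m - 2) Aid) (Rpow n) HR.
  rewrite /= size_nseq (_ : (m - 2).+2 = m); last by lia.
  by apply; move=> x [<-|[<-|/In_nseq ->]] //; apply: HC.
set j := ((n - m)./2)%N.
have Hj : (1 <= j)%N by rewrite /j; lia.
have Hp : (1 <= m - 1)%N by lia.
have HR := Rep_eqi (Rep_mul (RC j) (Rpow (m - 1))) (psum_C j Hp).
rewrite (_ : (j.*2.+1 + (m - 1) = n)%N) in HR; last by rewrite /j; lia.
have := len_of (s := Cid j :: nseq (m - 1) Aid) (Rpow n) HR.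
rewrite /= size_nseq (_ : (m - 1).+1 = m); last by lia.
by apply; move=> x [<-|/In_nseq ->] //; apply: HC.
Qed.

Lemma Uk_all k l : (2 <= k)%N -> (2 <= l)%N -> Uk (ideal_monoid R) k l.
Proof.
move=> Hk Hl; exists (mprod (nseq (k + l).*2 Aid)); split; apply: all_len;
  rewrite ?odd_double //; apply/andP; split => //; lia.
Qed.
End Atoms.
End T.

Lemma Uk_ge2 (R : idomainType) k l : (2 <= k)%N -> Uk (ideal_monoid R) k l -> (2 <= l)%N.
Proof.
move=> Hk [a [[s [Hs [Has [u [Hu Ea]]]]] [t [Ht [Hat [w [Hw Eb]]]]]]].
rewrite (unit_one Hu) mul1 in Ea; rewrite (unit_one Hw) mul1 in Eb.
case: s Hs Has Ea => [|x [|y s]] Hs Has Ea; [by rewrite -Hs in Hk|by rewrite -Hs in Hk|].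
have {}Ea : a = mop x (mop y (mprod s)) := Ea.
have Hx := Has x (or_introl erefl); have Hy := Has y (or_intror (or_introl erefl)).
case: t Ht Hat Eb => [|z [|z' t]] Ht Hat Eb; last by rewrite -Ht.
  by exfalso; apply: Hx.1; exists (mop y (mprod s)); rewrite -Ea Eb.
have {}Eb : a = mop z (one R) := Eb; rewrite mulI1 in Eb.
have Hz := Hat z (or_introl erefl).
case: (Hz.2 x (mop y (mprod s))); first by rewrite -Eb.
  by move=> /(proj1 Hx).
by move=> /unit_mulL /(proj1 Hy).
Qed.

Section U.
Variable R : idomainType.
Variables X1 X2 : R.
Hypothesis n1 : X1 != 0%R.
Hypothesis n2 : X2 != 0%R.
Hypothesis HA : is_atom (Aid n1 n2).
Hypothesis HB : is_atom (Bid n1 n2).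
Hypothesis HC : forall j, (1 <= j)%N -> is_atom (Cid n1 n2 j).

Lemma not_tK : ~ transfer_Krull (ideal_monoid R).
Proof.
have E3 : mop (Aid n1 n2) (mop (Aid n1 n2) (Aid n1 n2)) = mop (Aid n1 n2) (Bid n1 n2).
  apply: (Rep_uniq (X1 := X1) (X2 := X2) (S := full 3)).
    exact: Rep_eqi (Rep_mul (RA n1 n2) (Rep_eqi (Rep_mul (RA n1 n2) (RA n1 n2)) (psum_full 1 1))) (psum_full 1 2).
  apply: Rep_eqi (Rep_mul (RA n1 n2) (RB n1 n2)) _.
  by move=> x; rewrite psumC; exact: psum_B.
move=> [B [[[HBa _] [Hcan _]] [t [[Hm _] [_ [Hu HT2]]]]]].
have E : mop (t (Aid n1 n2)) (t (Aid n1 n2)) = t (Bid n1 n2).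
  by apply: (Hcan (t (Aid n1 n2))); rewrite -!Hm E3.
have [v [w [Ebvw [[e [He Hv]] [e' [He' Hw]]]]]] := HT2 _ _ _ (esym E).
have unit_l : forall e0, is_unit (mop (t (Aid n1 n2)) e0) -> is_unit (t (Aid n1 n2)).
  by move=> e0 [b Hb]; exists (mop e0 b); rewrite HBa.
case: (HB.2 _ _ Ebvw) => /(proj2 (Hu _)).
  by rewrite Hv => /unit_l /(proj1 (Hu _)) /(proj1 HA).
by rewrite Hw => /unit_l /(proj1 (Hu _)) /(proj1 HA).
Qed.

Lemma C_div j : (1 <= j)%N -> mpow (Aid n1 n2) (j.*2.+2) = mop (Cid n1 n2 j) (Aid n1 n2).
Proof.
move=> Hj; rewrite mpow_nseq; apply: (Rep_uniq (X1 := X1) (X2 := X2) (S := full (j.*2.+2))).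
  exact: Rpow.
have := Rep_eqi (Rep_mul (RC n1 n2 j) (RA n1 n2)) (psum_C j (p := 1) isT).
by rewrite addn1.
Qed.

Hypothesis Huc : unit_cancellative (ideal_monoid R).

Lemma C_neq i j : (1 <= i)%N -> (i < j)%N -> Cid n1 n2 i <> Cid n1 n2 j.
Proof.
move=> Hi Hij E.
set X := mprod (nseq i.*2.+2 (Aid n1 n2)).
set D := mprod (nseq (j - i).*2 (Aid n1 n2)).
have EX : X = mprod (nseq j.*2.+2 (Aid n1 n2)).
  by rewrite /X -!mpow_nseq !C_div ?E //; lia.
have HXD := Rep_eqi (Rep_mul (Rpow n1 n2 i.*2.+2) (Rpow n1 n2 (j - i).*2)) (psum_full _ _).
rewrite (_ : (i.*2.+2 + (j - i).*2 = j.*2.+2)%N) in HXD; last by lia.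
have EXD : mop X D = X by apply: (Rep_uniq HXD); rewrite EX; exact: Rpow.
have := Huc (or_introl EXD).
rewrite /D (_ : ((j - i).*2 = ((j - i).*2).-1.+1)%N); last by lia.
by move=> /unit_mulL /(proj1 HA).
Qed.

Lemma C_inj i j : (1 <= i)%N -> (1 <= j)%N -> Cid n1 n2 i = Cid n1 n2 j -> i = j.
Proof.
move=> Hi Hj E; case: (ltngtP i j) => // H.
  by case: (C_neq Hi H E).
by case: (C_neq Hj H (esym E)).
Qed.

Lemma not_lfg : ~ locally_fin_gen (ideal_monoid R).
Proof.
move=> H; have [gens [_ Hg]] := H (Aid n1 n2).
have Hin : forall j, (1 <= j)%N -> List.In (Cid n1 n2 j) gens.
  move=> j Hj.
  have [s [Hs [u [Hu Eu]]]] := Hg (Cid n1 n2 j) (ex_intro _ (j.*2.+2) (ex_intro _ (Aid n1 n2) (C_div Hj))).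
  rewrite (unit_one Hu) mul1 in Eu.
  have [g Hgs Eg] := atom_mprod (HC Hj) Eu.
  by rewrite Eg; apply: Hs.
pose n := length gens.
have Hf : forall j, {k | (k < n)%N /\ List.nth k gens (one R) = Cid n1 n2 j.+1}.
  move=> j; apply: IndefiniteDescription.constructive_indefinite_description.
  have [k [Hk Hk2]] := List.In_nth _ _ (one R) (Hin j.+1 isT).
  by exists k; split => //; apply/ltP.
pose f := fun j => proj1_sig (Hf j).
have finj : injective f.
  move=> j1 j2 Ef.
  have := proj2 (proj2_sig (Hf j1)); have := proj2 (proj2_sig (Hf j2)).
  rewrite -/(f j1) -/(f j2) Ef => -> E.
  by have := C_inj (ltn0Sn j2) (ltn0Sn j1) E => -[->].
have Hu : uniq (map f (iota 0 n.+1)) by rewrite map_inj_uniq // iota_uniq.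
have Hsub : {subset map f (iota 0 n.+1) <= iota 0 n}.
  move=> y /mapP [j _ ->]; rewrite mem_iota; have [Hk _] := proj2_sig (Hf j); rewrite /f; lia.
have := uniq_leq_size Hu Hsub; rewrite size_map !size_iota; lia.
Qed.
End U.

Unset Implicit Arguments.
Theorem lemma5p3 (R : idomainType) (X1 X2 : R) :
  X1 != 0%R -> X2 != 0%R -> X1 != X2 ->
  BF_monoid (ideal_monoid R) ->
  gen_is_atom (a1_gens X1 X2) ->
  gen_is_atom (b2_gens X1 X2) ->
  (forall i : nat, (1 <= i)%N -> gen_is_atom (c_gens X1 X2 i)) ->
  ~ transfer_Krull (ideal_monoid R) /\
  ~ locally_fin_gen (ideal_monoid R) /\
  (forall k : nat, (2 <= k)%N ->
     forall l : nat, Uk (ideal_monoid R) k l <-> (2 <= l)%N).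
Proof.
move=> n1 n2 _ [Huc _] Ha Hb Hc.
have HA : is_atom (Aid n1 n2) := atom_of Ha (gens_a X1 X2) (RA n1 n2).
have HB : is_atom (Bid n1 n2) := atom_of Hb (gens_b X1 X2) (RB n1 n2).
have HC : forall j, (1 <= j)%N -> is_atom (Cid n1 n2 j).
  by move=> j Hj; exact: atom_of (Hc j Hj) (gens_c X1 X2 j) (RC n1 n2 j).
split; first exact: not_tK HA HB.
split; first exact: not_lfg HA HC Huc.
move=> k Hk l; split; first exact: Uk_ge2.
by move=> Hl; apply: (Uk_all HA HB HC Hk Hl).
Qed.
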